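(* Let $0<\mu<L_{\max}^{-1}$ with $L_{\max}=\max_i\|A_i\|_2^2$, let $\{x^n\}$ be generated by GAITA (as in the context) from an arbitrary $x^0\in\mathbf{R}^N$, and let $\mathcal{L}$ be the set of limit points of $\{x^n\}$. Then $\mathcal{L}\subseteq\mathcal{F}_q$.
   Context: Let $A\in\mathbf{R}^{m\times N}$ have columns $A_1,\dots,A_N$, $y\in\mathbf{R}^m$, $\lambda>0$, $q\in(0,1)$, and $T_\lambda(x)=\frac12\|Ax-y\|_2^2+\lambda\sum_{i=1}^N|x_i|^q$. For a step size $\mu>0$ set $\tau_{\mu,q}=\frac{2-q}{2-2q}(2\lambda\mu(1-q))^{\frac{1}{2-q}}$ and $\eta_{\mu,q}=(2\lambda\mu(1-q))^{\frac{1}{2-q}}$. For $z\in\mathbf{R}$ let $prox_{\mu,\lambda|\cdot|^q}(z)=\arg\min_{v\in\mathbf{R}}\{\frac{(z-v)^2}{2\mu}+\lambda|v|^q\}$ (a set; a single point when $|z|\neq\tau_{\mu,q}$). Define $\mathcal{T}(z,w)$ as the unique element of $prox_{\mu,\lambda|\cdot|^q}(z)$ if $|z|\neq\tau_{\mu,q}$, and, if $|z|=\tau_{\mu,q}$, as $sgn(z)\eta_{\mu,q}$ when $w\neq0$ and $0$ when $w=0$ ($sgn(0)=0$). GAITA: given $x^0\in\mathbf{R}^N$, for $n=0,1,2,\dots$ let $i=(n\bmod N)+1$, $z_i^n=x_i^n-\mu A_i^T(Ax^n-y)$, $x_i^{n+1}=\mathcal{T}(z_i^n,x_i^n)$, $x_j^{n+1}=x_j^n$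 for $j\neq i$. The fixed point set is $\mathcal{F}_q=\{x\in\mathbf{R}^N: x_i\in prox_{\mu,\lambda|\cdot|^q}(x_i-\mu A_i^T(Ax-y))\text{ for all }i=1,\dots,N\}$, i.e. the fixed points of the thresholding map $x\mapsto Prox_{\mu,\lambda\|\cdot\|_q^q}(x-\mu A^T(Ax-y))$ applied componentwise. *)

(* Defs.v *)
From HB Require Import structures.
From mathcomp Require Import all_boot all_order all_algebra.
From mathcomp Require Import all_classical all_reals all_analysis.
Set Implicit Arguments. Unset Strict Implicit. Unset Printing Implicit Defensive.
Import Order.TTheory GRing.Theory Num.Theory.
Import numFieldNormedType.Exports.
Local Open Scope classical_set_scope.
Local Open Scope ring_scope.

Section GAITA.
Variables (R : realType) (m N : nat).
Variables (A : 'M[R]_(m, N)) (y : 'cV[R]_m) (lam q mu : R).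

Definition col_sqnorm (i : 'I_N) : R := \sum_(j < m) (A j i) ^+ 2.

Definition Lmax : R := \big[Num.max/0]_(i < N) col_sqnorm i.

Definition grad_i (x : 'cV[R]_N) (i : 'I_N) : R :=
  ((col i A)^T *m (A *m x - y)) 0 0.

Definition T_lambda (x : 'cV[R]_N) : R :=
  2^-1 * \sum_(j < m) ((A *m x - y) j 0) ^+ 2
  + lam * \sum_(i < N) `|x i 0| `^ q.

Definition prox (z : R) : set R :=
  [set v | forall w : R,
     (z - v) ^+ 2 / (2 * mu) + lam * `|v| `^ q
       <= (z - w) ^+ 2 / (2 * mu) + lam * `|w| `^ q].

Definition eta_mq : R := (2 * lam * mu * (1 - q)) `^ ((2 - q)^-1).
Definition tau_mq : R := (2 - q) / (2 - 2 * q) * eta_mq.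

Definition Tthr (z w : R) : R :=
  if `|z| == tau_mq then (if w != 0 then Num.sg z * eta_mq else 0)
  else xget 0 (prox z).

(* one GAITA step at iteration n: update coordinate i = n mod N (0-based) *)
Definition gaita_step (n : nat) (x : 'cV[R]_N) : 'cV[R]_N :=
  \col_(j < N)
    (if nat_of_ord j == (n %% N)%N
     then Tthr (x j 0 - mu * grad_i x j) (x j 0)
     else x j 0).

Fixpoint gaita (x0 : 'cV[R]_N) (n : nat) : 'cV[R]_N :=
  match n with
  | O => x0
  | S k => gaita_step k (gaita x0 k)
  end.

Definition Fq : set 'cV[R]_N :=
  [set x : 'cV[R]_N | forall i : 'I_N, prox (x i 0 - mu * grad_i x i) (x i 0)].

End GAITA.

Definition limit_points (R : realType) (N : nat) (u : nat -> 'cV[R]_N)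
  : set 'cV[R]_N :=
  [set p | exists phi : nat -> nat,
     (forall k, (phi k < phi k.+1)%N) /\ ((fun k => u (phi k)) @ \oo --> p)].

(* Main.v *)
Require Import Defs.
From HB Require Import structures.
From mathcomp Require Import all_boot all_order all_algebra.
From mathcomp Require Import all_classical all_reals all_analysis.
From mathcomp Require Import ring lra zify.
Import Order.TTheory GRing.Theory Num.Theory.
Import numFieldNormedType.Exports.
Local Open Scope classical_set_scope.
Local Open Scope ring_scope.
Set Implicit Arguments. Unset Strict Implicit.

Lemma powR_norm_cont (R : realType) (q : R) : 0 < q ->
  forall x : R, (fun a : R => `|a| `^ q) @ x --> `|x| `^ q.
Proof.
move=> q0 x.
have [->|x0] := eqVneq x 0.
  have -> : `|0:R| `^ q = 0 by rewrite normr0 powR0 ?gt_eqF.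
  apply/cvgrPdist_lt => e e0.
  have ep : 0 < e `^ q^-1 by rewrite powR_gt0.
  exists (e `^ q^-1) => // a /= ha.
  rewrite sub0r normrN in ha.
  rewrite sub0r normrN ger0_norm ?powR_ge0//.
  have -> : e = (e `^ q^-1) `^ q.
    by rewrite -powRrM mulVf ?gt_eqF// powRr1 ?ltW.
  by apply: gt0_ltr_powR => //; rewrite ?inE/= ?nnegrE ?powR_ge0 ?normr_ge0.
have nx : 0 < `|x| by rewrite normr_gt0.
have H : (fun a : R => expR (q * ln `|a|)) @ x --> expR (q * ln `|x|).
  apply: continuous_cvg; first exact: continuous_expR.
  apply: cvgMr.
  apply: continuous_cvg; first exact: continuous_ln.
  exact: cvg_norm.
rewrite {2}/powR gt_eqF//.
apply: cvg_trans H.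
apply: near_eq_cvg.
near=> a.
rewrite /powR gt_eqF//.
near: a.
exists `|x| => // a /= h.
rewrite normr_gt0; apply/eqP => a0; move: h; rewrite a0 subr0 ltxx.
Unshelve. all: by end_near.
Qed.

Lemma G_ge0 (R : realType) (lam q mu : R) (lam0 : 0 < lam) (q0 : 0 < q) (q1 : q < 1) (mu0 : 0 < mu) (t : R) : 0 <= t ->
  0 <= t ^+ 2 - 2 * tau_mq lam q mu * t + 2 * mu * lam * t `^ q.
Proof.
rewrite le_eqVlt => /orP[/eqP<-|t0].
  by rewrite powR0 ?gt_eqF// expr0n/= !mulr0 subr0 addr0.
set c := 2 * lam * mu * (1 - q).
have c0 : 0 < c by rewrite /c !mulr_gt0// subr_gt0.
set b := (2 - q)^-1 * ln c.
set a := ln t.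
have hY : eta_mq lam q mu = expR b by rewrite /eta_mq /powR gt_eqF.
have hX : t = expR a by rewrite /a lnK.
have hc : c = expR b * expR ((1 - q) * b).
  rewrite -expRD.
  have -> : b + (1 - q) * b = ln c.
    have q2 : 2 - q != 0 by rewrite gt_eqF //; lra.
    by rewrite /b; field.
  by symmetry; apply: lnK; rewrite posrE.
have E1 := expR_ge1Dx ((1 - q) * (b - a)).
have E2 := expR_ge1Dx (a - b).
rewrite expRD expRN in E2.
have Y0 : 0 < expR b by apply: expR_gt0.
have X0 : 0 < expR a by apply: expR_gt0.
have htq : t `^ q = expR a * expR ((q - 1) * a).
  by rewrite /powR gt_eqF// -expRD -{1}(mul1r a) -mulrDl addrC subrK.
have key : c * t `^ q = t * expR b * expR ((1 - q) * (b - a)).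
  rewrite htq hc hX -!expRD; congr expR; ring.
have E2' : a - b <= t / expR b - 1.
  move: E2; rewrite -hX; lra.
have lmu : 2 * mu * lam = c / (1 - q).
  rewrite /c; field; rewrite gt_eqF //; lra.
rewrite /tau_mq hY lmu.
set Y := expR b in Y0 hc key E2' *.
set E := expR ((1 - q) * (b - a)) in E1 key *.
have hd : Y - t <= Y * (b - a).
  have : Y * (a - b) <= Y * (t / Y - 1) by rewrite ler_wpM2l // ltW.
  rewrite !mulrBr mulr1 [Y * (t / Y)]mulrC divfK ?gt_eqF//; lra.
have tYE : t * Y * (1 + (1 - q) * (b - a)) <= t * Y * E.
  by rewrite ler_wpM2l // mulr_ge0 // ltW.
have h2 : (1 - q) * t * (Y - t) <= (1 - q) * t * (Y * (b - a)).
  apply: ler_wpM2l hd; apply: mulr_ge0; [by rewrite subr_ge0 ltW | exact: ltW].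
have -> : c / (1 - q) * t `^ q = (c * t `^ q) / (1 - q) by rewrite mulrAC.
rewrite key.
have -> : t ^+ 2 - 2 * ((2 - q) / (2 - 2 * q) * Y) * t + t * Y * E / (1 - q)
   = ((1 - q) * t ^+ 2 - (2 - q) * Y * t + t * Y * E) / (1 - q).
  field; rewrite ?gt_eqF //; lra.
apply: divr_ge0; last by rewrite subr_ge0 ltW.
nra.
Qed.

Lemma eta_gt0 (R : realType) (lam q mu : R) (lam0 : 0 < lam) (q1 : q < 1) (mu0 : 0 < mu) :
  0 < eta_mq lam q mu.
Proof. by rewrite /eta_mq powR_gt0 // !mulr_gt0 // subr_gt0. Qed.

Lemma G_eta (R : realType) (lam q mu : R) (lam0 : 0 < lam) (q0 : 0 < q) (q1 : q < 1) (mu0 : 0 < mu) :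
  let t := eta_mq lam q mu in
  t ^+ 2 - 2 * tau_mq lam q mu * t + 2 * mu * lam * t `^ q = 0.
Proof.
move=> t.
set c := 2 * lam * mu * (1 - q).
have c0 : 0 < c by rewrite /c !mulr_gt0// subr_gt0.
set b := (2 - q)^-1 * ln c.
have hY : t = expR b by rewrite /t /eta_mq /powR gt_eqF.
have hc : c = expR b * expR ((1 - q) * b).
  rewrite -expRD.
  have -> : b + (1 - q) * b = ln c.
    have q2 : 2 - q != 0 by rewrite gt_eqF //; lra.
    by rewrite /b; field.
  by symmetry; apply: lnK; rewrite posrE.
have htq : t `^ q = expR (q * b) by rewrite /powR hY gt_eqF ?expR_gt0 // expRK.
have key : c * t `^ q = t * t.
  by rewrite htq hc hY -!expRD; congr expR; ring.
have lmu : 2 * mu * lam = c / (1 - q).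
  rewrite /c; field; rewrite gt_eqF //; lra.
rewrite /tau_mq -/t lmu.
have -> : c / (1-q) * t `^ q = c * t `^ q / (1-q) by rewrite mulrAC.
rewrite key.
field; rewrite ?gt_eqF //; lra.
Qed.

Definition Fobj (R : realType) (lam q mu z v : R) :=
  (z - v) ^+ 2 / (2 * mu) + lam * `|v| `^ q.

Lemma prox_thr (R : realType) (lam q mu : R) (lam0 : 0 < lam) (q0 : 0 < q) (q1 : q < 1) (mu0 : 0 < mu) (z : R) :
  `|z| = tau_mq lam q mu ->
  prox lam q mu z 0 /\ prox lam q mu z (Num.sg z * eta_mq lam q mu).
Proof.
move=> hz.
have e0 := eta_gt0 lam0 q1 mu0.
have t0 : 0 < tau_mq lam q mu.
  rewrite /tau_mq mulr_gt0 // divr_gt0 //; lra.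
have z0 : z != 0 by rewrite -normr_gt0 hz.
have H0 : forall w, Fobj lam q mu z 0 <= Fobj lam q mu z w.
  move=> w.
  have G := G_ge0 lam0 q0 q1 mu0 (normr_ge0 w).
  have zw : z * w <= tau_mq lam q mu * `|w|.
    by rewrite -hz -normrM ler_norm.
  have w2 : w ^+ 2 = `|w| ^+ 2 by rewrite real_normK ?num_real.
  rewrite /Fobj normr0 powR0 ?gt_eqF // mulr0 addr0 -subr_ge0.
  have -> : (z - w) ^+ 2 / (2 * mu) + lam * `|w| `^ q - (z - 0) ^+ 2 / (2 * mu)
     = (w ^+ 2 - 2 * (z * w) + 2 * mu * lam * `|w| `^ q) / (2 * mu).
    field; rewrite gt_eqF //; lra.
  apply: divr_ge0; last lra.
  rewrite w2; lra.
split; first by move=> w; exact: H0.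
move=> w; apply: le_trans (H0 w).
rewrite le_eqVlt; apply/orP; left; apply/eqP.
have GE := G_eta lam0 q0 q1 mu0.
have hs : z * Num.sg z = tau_mq lam q mu by rewrite mulrC -normrEsg.
have hn : `|Num.sg z * eta_mq lam q mu| = eta_mq lam q mu.
  by rewrite normrM normr_sg z0 mul1r gtr0_norm.
rewrite /Fobj hn normr0 powR0 ?gt_eqF // mulr0 addr0.
apply/eqP; rewrite -subr_eq0; apply/eqP.
have -> : (z - Num.sg z * eta_mq lam q mu) ^+ 2 / (2 * mu) + lam * eta_mq lam q mu `^ q -
  (z - 0) ^+ 2 / (2 * mu) = ((eta_mq lam q mu) ^+ 2 - 2 * (z * Num.sg z) * eta_mq lam q mu
     + 2 * mu * lam * eta_mq lam q mu `^ q + (Num.sg z ^+ 2 - 1) * (eta_mq lam q mu) ^+ 2) / (2 * mu).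
  field; rewrite gt_eqF //; lra.
rewrite hs GE add0r.
have -> : Num.sg z ^+ 2 = 1.
  by rewrite -real_normK ?num_real // normr_sg z0 expr1n.
by rewrite subrr mul0r mul0r.
Qed.

Lemma Fobj_cvg (R : realType) (lam q mu : R) (q0 : 0 < q) T (F : set_system T) {FF : Filter F}
  (a b : T -> R) a0 b0 : a @ F --> a0 -> b @ F --> b0 ->
  (fun t => Fobj lam q mu (a t) (b t)) @ F --> Fobj lam q mu a0 b0.
Proof.
move=> ha hb.
have E : forall z v, Fobj lam q mu z v = (z - v) * (z - v) * (2 * mu)^-1 + lam * `|v| `^ q.
  by move=> z v; rewrite /Fobj expr2.
rewrite E (_ : (fun t => Fobj lam q mu (a t) (b t)) = (fun t => (a t - b t) * (a t - b t) * (2 * mu)^-1 + lam * `|b t| `^ q)); last first.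
  by apply: funext => t; rewrite E.
apply: cvgD.
  apply: cvgM; last exact: cvg_cst.
  by apply: cvgM; apply: cvgB.
apply: cvgM; first exact: cvg_cst.
apply: (@cvg_comp _ _ _ b (fun v : R => `|v| `^ q) F (nbhs b0)); [exact: hb | exact: powR_norm_cont q0 b0].
Qed.

Lemma prox_ex (R : realType) (lam q mu : R) (q0 : 0 < q) (lam0 : 0 <= lam) (mu0 : 0 < mu) (z : R) :
  exists v, prox lam q mu z v.
Proof.
set M := `|z| * 2 + 1.
have M0 : -M <= M by rewrite /M; have := normr_ge0 z; lra.
have cf : {within `[-M, M], continuous (Fobj lam q mu z)}.
  apply: continuous_subspaceT => x.
  exact: (@Fobj_cvg R lam q mu q0 _ (nbhs x) _ (fun=> z) id z x (cvg_cst _) cvg_id).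
have [c cin cmin] := EVT_min M0 cf.
exists c => w.
have [wM|wM] := leP `|w| M.
  apply: cmin; rewrite in_itv /=; rewrite ler_norml in wM; exact: wM.
apply: (le_trans (cmin 0 _)); first by rewrite in_itv /=; lra.
rewrite /Fobj normr0 powR0 ?gt_eqF // mulr0 addr0 subr0.
have h1 : z ^+ 2 <= (z - w) ^+ 2.
  have zw : `|z| + 1 <= `|w| - `|z| by rewrite /M in wM; lra.
  have : `|w| - `|z| <= `|z - w|.
    by rewrite distrC; have := lerB_dist w z; lra.
  move=> h.
  rewrite -(real_normK (num_real z)) -(real_normK (num_real (z - w))).
  have := normr_ge0 z; nra.
have h2 : z ^+ 2 / (2 * mu) <= (z - w) ^+ 2 / (2 * mu) by rewrite ler_pM2r // invr_gt0 mulr_gt0.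
have h3 : 0 <= lam * `|w| `^ q by apply: mulr_ge0 => //; apply: powR_ge0.
lra.
Qed.
Lemma cvg_comp_ge (R : realType) (u : nat -> R) (l : R) (g : nat -> nat) :
  (forall k, k <= g k)%N -> u @ \oo --> l -> (fun k => u (g k)) @ \oo --> l.
Proof.
move=> hg /cvgrPdist_lt h; apply/cvgrPdist_lt => e e0.
have [M _ HM] := h e e0.
exists M => // k /= Mk; apply: HM; exact: leq_trans Mk (hg k).
Qed.

Lemma gcvg_close (R : realType) (u v S : nat -> R) (l : R) :
  u @ \oo --> l -> S @ \oo --> 0 -> (forall k, `|v k - u k| <= S k) -> v @ \oo --> l.
Proof.
move=> /cvgrPdist_lt hu /cvgrPdist_lt hS hvu; apply/cvgrPdist_lt => e e0.
have e2 : 0 < e / 2 by rewrite divr_gt0.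
have [M1 _ H1] := hu _ e2.
have [M2 _ H2] := hS _ e2.
exists (maxn M1 M2) => // k /= Mk.
have h1 := H1 k (leq_trans (leq_maxl _ _) Mk).
have h2 := H2 k (leq_trans (leq_maxr _ _) Mk).
have h3 := hvu k.
rewrite /= sub0r normrN in h2.
have : `|l - v k| <= `|l - u k| + `|u k - v k| by apply: ler_distD.
rewrite distrC in h3.
have := ler_norm (S k).
lra.
Qed.

Lemma cvg_sum_ord (R : realType) T (F : set_system T) {FF : Filter F} n
  (f : 'I_n -> T -> R) (a : 'I_n -> R) :
  (forall i, f i @ F --> a i) ->
  (fun t => \sum_(i < n) f i t) @ F --> \sum_(i < n) a i.
Proof.
elim: n f a => [|n IH] f a h.
  rewrite big_ord0 (_ : (fun t => _) = fun=> 0); first exact: cvg_cst.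
  by apply: funext => t; rewrite big_ord0.
rewrite big_ord_recr (_ : (fun t => _) = fun t => \sum_(i < n) f (widen_ord (leqnSn n) i) t + f ord_max t); last first.
  by apply: funext => t; rewrite big_ord_recr.
apply: cvgD; last exact: h.
exact: (IH (fun i => f (widen_ord (leqnSn n) i)) (fun i => a (widen_ord (leqnSn n) i))).
Qed.

Lemma sq_cvg0 (R : realType) (d : nat -> R) :
  (fun n => d n ^+ 2) @ \oo --> 0 -> (fun n => `|d n|) @ \oo --> 0.
Proof.
move=> /cvgrPdist_lt h; apply/cvgrPdist_lt => e e0.
have [M _ HM] := h (e * e) (mulr_gt0 e0 e0).
exists M => // k /= Mk.
have := HM k Mk; rewrite /= !sub0r !normrN normr_id ger0_norm ?sqr_ge0 // => hk.
rewrite -(real_normK (num_real (d k))) in hk.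
have := normr_ge0 (d k).
nra.
Qed.

Lemma Tthr_prox (R : realType) (lam q mu : R) (lam0 : 0 < lam) (q0 : 0 < q) (q1 : q < 1) (mu0 : 0 < mu) (z w : R) :
  prox lam q mu z (Tthr lam q mu z w).
Proof.
rewrite /Tthr; case: ifP => [/eqP hz|_].
  by case: ifP => _; [exact: (prox_thr lam0 q0 q1 mu0 hz).2 | exact: (prox_thr lam0 q0 q1 mu0 hz).1].
by apply: xgetPex; apply: prox_ex => //; exact: ltW.
Qed.

Lemma seq_ler (R : realType) (f g : nat -> R) (l l' : R) :
  f @ \oo --> l -> g @ \oo --> l' -> (forall k, f k <= g k) -> l <= l'.
Proof.
move=> /cvgrPdist_lt hf /cvgrPdist_lt hg hfg.
rewrite leNgt; apply/negP => hlt.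
have e0 : 0 < (l - l') / 2 by rewrite divr_gt0 // subr_gt0.
have [M1 _ H1] := hf _ e0.
have [M2 _ H2] := hg _ e0.
have h1 := H1 (maxn M1 M2) (leq_maxl _ _).
have h2 := H2 (maxn M1 M2) (leq_maxr _ _).
have h3 := hfg (maxn M1 M2).
move: h1 h2 h3; rewrite /= !ltr_norml => /andP[h1 h1'] /andP[h2 h2'] h3.
lra.
Qed.

Definition upd (R : realType) N (x : 'cV[R]_N) (i : 'I_N) (v : R) : 'cV[R]_N :=
  \col_(j < N) (if j == i then v else x j 0).

Lemma Aupd (R : realType) m N (A : 'M[R]_(m, N)) (x : 'cV[R]_N) i v j :
  (A *m upd x i v) j 0 = (A *m x) j 0 + A j i * (v - x i 0).
Proof.
rewrite !mxE (bigD1 i) //= [in RHS](bigD1 i) //= !mxE eqxx.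
rewrite (eq_bigr (fun k => A j k * x k 0)); last first.
  by move=> k /negPf hk; rewrite !mxE hk.
ring.
Qed.

Lemma pen_upd (R : realType) N (x : 'cV[R]_N) i v (q : R) :
  \sum_(k < N) `|upd x i v k 0| `^ q
  = \sum_(k < N) `|x k 0| `^ q - `|x i 0| `^ q + `|v| `^ q.
Proof.
rewrite (bigD1 i) //= [in RHS](bigD1 i) //= !mxE eqxx.
rewrite (eq_bigr (fun k => `|x k 0| `^ q)); last first.
  by move=> k /negPf hk; rewrite !mxE hk.
ring.
Qed.

Lemma gradE (R : realType) m N (A : 'M[R]_(m, N)) y (x : 'cV[R]_N) i :
  grad_i A y x i = \sum_(j < m) A j i * (A *m x - y) j 0.
Proof. by rewrite /grad_i !mxE; apply: eq_bigr => j _; rewrite !mxE. Qed.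

Lemma step_decr (R : realType) m N (A : 'M[R]_(m, N)) y (lam q mu : R)
  (mu0 : 0 < mu) (x : 'cV[R]_N) i v :
  prox lam q mu (x i 0 - mu * grad_i A y x i) v ->
  T_lambda A y lam q (upd x i v) + (1 - mu * col_sqnorm A i) / (2 * mu) * (v - x i 0) ^+ 2
  <= T_lambda A y lam q x.
Proof.
move=> /(_ (x i 0)) hp.
set d := v - x i 0.
set g := grad_i A y x i.
have hres : \sum_(j < m) ((A *m upd x i v - y) j 0) ^+ 2 =
   \sum_(j < m) ((A *m x - y) j 0) ^+ 2 + 2 * d * g + d ^+ 2 * col_sqnorm A i.
  rewrite /g gradE /col_sqnorm mulr_sumr mulr_sumr -!big_split /=.
  apply: eq_bigr => j _.
  have sub : forall M : 'cV[R]_m, (M - y) j 0 = M j 0 - y j 0 by move=> M; rewrite !mxE.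
  rewrite !sub Aupd -/d; ring.
rewrite /T_lambda hres pen_upd.
move: hp; rewrite -/g.
have -> : x i 0 - mu * g - v = - (mu * g + d) by rewrite /d; ring.
have -> : x i 0 - mu * g - x i 0 = - (mu * g) by ring.
set P := `|v| `^ q. set P0 := `|x i 0| `^ q.
set S := \sum_(j < m) _. set Q := \sum_(k < N) _.
set L := col_sqnorm A i.
have e1 : (- (mu * g + d)) ^+ 2 / (2 * mu) = mu * g ^+ 2 / 2 + g * d + d ^+ 2 / (2 * mu).
  by field; rewrite gt_eqF.
have e2 : (- (mu * g)) ^+ 2 / (2 * mu) = mu * g ^+ 2 / 2.
  by field; rewrite gt_eqF.
have e3 : (1 - mu * L) / (2 * mu) * d ^+ 2 = d ^+ 2 / (2 * mu) - L * d ^+ 2 / 2.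
  by field; rewrite gt_eqF.
rewrite e1 e2 e3.
move=> hp.
have e4 : lam * (Q - P0 + P) = lam * Q - lam * P0 + lam * P by ring.
rewrite e4.
lra.
Qed.

Definition ixn N (N0 : (0 < N)%N) (n : nat) : 'I_N := Ordinal (ltn_pmod n N0).

Lemma gaita_S (R : realType) m N (A : 'M[R]_(m, N)) y (lam q mu : R) x0 (N0 : (0 < N)%N) n :
  let x := gaita A y lam q mu x0 n in
  let i := ixn N0 n in
  gaita A y lam q mu x0 n.+1 =
  upd x i (Tthr lam q mu (x i 0 - mu * grad_i A y x i) (x i 0)).
Proof.
move=> x i /=; rewrite /gaita_step /upd -/x.
apply/matrixP => j k; rewrite !mxE.
case: (eqVneq j i) => [->|hj]; first by rewrite /= eqxx.
have -> : (nat_of_ord j == (n %% N)%N) = false := negPf hj.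
done.
Qed.

Lemma mx_entry_le (R : realType) m n (M : 'M[R]_(m, n)) j l : `|M j l| <= `|M|.
Proof.
rewrite [leRHS]/Num.Def.normr /= mx_normrE; apply/bigmax_geP; right => /=; by exists (j, l).
Qed.

Lemma mx_entry_cvg (R : realType) m n (u : nat -> 'M[R]_(m, n)) (P : 'M[R]_(m, n)) j l :
  u @ \oo --> P -> (fun k => u k j l) @ \oo --> P j l.
Proof.
move=> /cvgrPdist_lt h; apply/cvgrPdist_lt => e e0.
have [M _ HM] := h e e0.
exists M => // k /= Mk.
apply: le_lt_trans (HM k Mk).
have -> : P j l - u k j l = (P - u k) j l by rewrite !mxE.
exact: mx_entry_le.
Qed.

Lemma grad_cvg (R : realType) m N (A : 'M[R]_(m, N)) y (u : nat -> 'cV[R]_N) (p : 'cV[R]_N) i :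
  (forall l, (fun k => u k l 0) @ \oo --> p l 0) ->
  (fun k => grad_i A y (u k) i) @ \oo --> grad_i A y p i.
Proof.
move=> h.
have E : forall x : 'cV[R]_N, grad_i A y x i = \sum_(j < m) A j i * (\sum_(l < N) A j l * x l 0 - y j 0).
  by move=> x; rewrite gradE; apply: eq_bigr => j _; rewrite !mxE.
rewrite E (_ : (fun k => _) = fun k => \sum_(j < m) A j i * (\sum_(l < N) A j l * u k l 0 - y j 0)); last first.
  by apply: funext => k; rewrite E.
apply: cvg_sum_ord => j.
apply: cvgM; first exact: cvg_cst.
apply: cvgB; last exact: cvg_cst.
apply: cvg_sum_ord => l.
apply: cvgM; first exact: cvg_cst.
exact: h.
Qed.

Lemma T_ge0 (R : realType) m N (A : 'M[R]_(m, N)) y (lam q : R) (lam0 : 0 <= lam) x :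
  0 <= T_lambda A y lam q x.
Proof.
rewrite /T_lambda; apply: addr_ge0; apply: mulr_ge0 => //.
- by apply: sumr_ge0 => j _; exact: sqr_ge0.
- by apply: sumr_ge0 => j _; exact: powR_ge0.
Qed.

Lemma col_le_Lmax (R : realType) m N (A : 'M[R]_(m, N)) i : col_sqnorm A i <= Lmax A.
Proof. exact: le_bigmax. Qed.

Lemma mod_shift N (N0 : (0 < N)%N) (i : 'I_N) n :
  ((n + (i + (N - n %% N)) %% N) %% N = i)%N.
Proof.
rewrite modnDmr.
have hn := ltn_pmod n N0.
have -> : (n + (i + (N - n %% N)) = (n %/ N).+1 * N + i)%N.
  have hd := divn_eq n N.
  move: hn hd; set a := (n %/ N)%N; set b := (n %% N)%N => hn hd.
  rewrite mulSn; lia.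
by rewrite modnMDl modn_small.
Qed.

Unset Implicit Arguments. Set Strict Implicit.
Theorem theorem2 (R : realType) (m N : nat) (A : 'M[R]_(m, N)) (y : 'cV[R]_m)
  (lam q mu : R) (x0 : 'cV[R]_N) :
  0 < lam -> 0 < q -> q < 1 ->
  0 < mu -> mu * Lmax A < 1 ->
  limit_points (gaita A y lam q mu x0) `<=` Fq A y lam q mu.
Proof.
move=> lam0 q0 q1 mu0 hL p [phi [hphi hcv]] i.
have N0 : (0 < N)%N by apply: leq_ltn_trans (leq0n _) (ltn_ord i).
set X := gaita A y lam q mu x0.
set T := fun n => T_lambda A y lam q (X n).
set d := fun n => X n.+1 (ixn N0 n) 0 - X n (ixn N0 n) 0.
set kap := (1 - mu * Lmax A) / (2 * mu).
have kap0 : 0 < kap by rewrite /kap divr_gt0 ?mulr_gt0 // subr_gt0.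
have hX : forall n, X n.+1 = upd (X n) (ixn N0 n)
    (Tthr lam q mu (X n (ixn N0 n) 0 - mu * grad_i A y (X n) (ixn N0 n)) (X n (ixn N0 n) 0)).
  by move=> n; exact: gaita_S.
have step : forall n, T n.+1 + kap * d n ^+ 2 <= T n.
  move=> n.
  have := @step_decr R m N A y lam q mu mu0 _ _ _ (Tthr_prox lam0 q0 q1 mu0
     (X n (ixn N0 n) 0 - mu * grad_i A y (X n) (ixn N0 n)) (X n (ixn N0 n) 0)).
  rewrite -hX => h.
  have e : X n.+1 (ixn N0 n) 0 = Tthr lam q mu (X n (ixn N0 n) 0 - mu * grad_i A y (X n) (ixn N0 n)) (X n (ixn N0 n) 0).
    by rewrite hX mxE eqxx.
  rewrite -e in h.
  have h' : T n.+1 + (1 - mu * col_sqnorm A (ixn N0 n)) / (2 * mu) * d n ^+ 2 <= T n := h.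
  have hk : kap <= (1 - mu * col_sqnorm A (ixn N0 n)) / (2 * mu).
    rewrite /kap ler_pM2r ?invr_gt0 ?mulr_gt0 //.
    have := col_le_Lmax A (ixn N0 n).
    move=> h2; have : mu * col_sqnorm A (ixn N0 n) <= mu * Lmax A by rewrite ler_pM2l.
    lra.
  have : kap * d n ^+ 2 <= (1 - mu * col_sqnorm A (ixn N0 n)) / (2 * mu) * d n ^+ 2.
    by rewrite ler_wpM2r // sqr_ge0.
  lra.
have other : forall n j, `|X n.+1 j 0 - X n j 0| <= `|d n|.
  move=> n j.
  case: (eqVneq j (ixn N0 n)) => [->|hj]; first by [].
  by rewrite {1}hX mxE (negPf hj) subrr normr0.
have Tdec : forall n, T n.+1 <= T n.
  move=> n; have := step n; have := sqr_ge0 (d n).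
  move=> h1 h2; have : 0 <= kap * d n ^+ 2 by rewrite mulr_ge0 // ltW.
  lra.
have Tcv : cvgn T.
  apply: nonincreasing_is_cvgn; first by apply/nonincreasing_seqP.
  by exists 0 => _ [n _ <-]; apply: T_ge0; exact: ltW.
set l := limn T.
have T1 : T @ \oo --> l by exact: Tcv.
have T2 : (fun n => T n.+1) @ \oo --> l.
  by rewrite (cvg_shiftS T).
have d2 : (fun n => d n ^+ 2) @ \oo --> 0.
  apply: (@squeeze_cvgr _ _ _ _ (fun=> 0) (fun n => (T n - T n.+1) / kap)).
  - apply: nearW => n; rewrite sqr_ge0 /= ler_pdivlMr //.
    have := step n; lra.
  - exact: cvg_cst.
  - rewrite -(mul0r kap^-1) -(subrr l).
    apply: cvgM; last exact: cvg_cst.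
    exact: cvgB.
have dcv := sq_cvg0 d2.
have disp : forall n s0 j, `|X (n + s0)%N j 0 - X n j 0| <= \sum_(0 <= t < s0) `|d (n + t)%N|.
  move=> n; elim => [|s0 IH] j.
    by rewrite addn0 subrr normr0 big_geq.
  rewrite addnS big_nat_recr //=.
  apply: le_trans (ler_distD (X (n + s0)%N j 0) _ _) _.
  by rewrite [leRHS]addrC; apply: lerD; [exact: other | exact: IH].
have disp' : forall n s0 j, (s0 <= N)%N ->
    `|X (n + s0)%N j 0 - X n j 0| <= \sum_(t < N) `|d (n + t)%N|.
  move=> n s0 j hs; apply: le_trans (disp n s0 j) _.
  rewrite -(big_mkord xpredT (fun t => `|d (n + t)%N|)) (@big_cat_nat _ _ _ s0 0 N _ _ (leq0n s0) hs) /= lerDl.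
  by apply: sumr_ge0 => t _.
have hphik : forall k, (k <= phi k)%N.
  by elim => [|k IH] //; apply: leq_ltn_trans IH (hphi k).
have Scv : (fun k => \sum_(t < N) `|d (phi k + t)%N|) @ \oo --> 0.
  have H := @cvg_sum_ord R nat \oo _ N (fun t k => `|d (phi k + t)%N|) (fun=> 0)
    (fun t => @cvg_comp_ge R (fun n => `|d n|) 0 (fun k => phi k + t)%N
       (fun k => leq_trans (hphik k) (leq_addr _ _)) dcv).
  rewrite big1 // in H; exact: H.
set s := fun n => ((i + (N - n %% N)) %% N)%N.
set nk := fun k => (phi k + s (phi k))%N.
have hsN : forall n, (s n < N)%N by move=> n; exact: ltn_pmod.
have hmod : forall k, ixn N0 (nk k) = i.
  by move=> k; apply: val_inj; rewrite /= /nk /s mod_shift.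
have cvx : forall j, (fun k => X (nk k) j 0) @ \oo --> p j 0.
  move=> j.
  apply: (@gcvg_close R (fun k => X (phi k) j 0) (fun k => X (nk k) j 0)
    (fun k => \sum_(t < N) `|d (phi k + t)%N|) (p j 0)).
  - exact: (@mx_entry_cvg R N 1 _ p j 0 hcv).
  - exact: Scv.
  - move=> k; exact: disp' (ltnW (hsN _)).
have cvv : (fun k => X (nk k).+1 i 0) @ \oo --> p i 0.
  apply: (@gcvg_close R (fun k => X (phi k) i 0) (fun k => X (nk k).+1 i 0)
    (fun k => \sum_(t < N) `|d (phi k + t)%N|) (p i 0)).
  - exact: (@mx_entry_cvg R N 1 _ p i 0 hcv).
  - exact: Scv.
  - move=> k; rewrite /nk -addnS; exact: disp' (hsN _).
have cvz : (fun k => X (nk k) i 0 - mu * grad_i A y (X (nk k)) i) @ \oo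
    --> p i 0 - mu * grad_i A y p i.
  apply: cvgB; first exact: cvx.
  apply: cvgM; first exact: cvg_cst.
  exact: grad_cvg.
move=> w.
change (Fobj lam q mu (p i 0 - mu * grad_i A y p i) (p i 0) <=
        Fobj lam q mu (p i 0 - mu * grad_i A y p i) w).
have h1 := @Fobj_cvg R lam q mu q0 nat \oo _ _ _ _ _ cvz cvv.
have h2 := @Fobj_cvg R lam q mu q0 nat \oo _ _ (fun=> w) _ w cvz (cvg_cst w).
apply: (seq_ler (h1 eventually_filter) (h2 eventually_filter eventually_filter)) => k.

have := Tthr_prox lam0 q0 q1 mu0 (X (nk k) i 0 - mu * grad_i A y (X (nk k)) i) (X (nk k) i 0) w.
by rewrite hX hmod mxE eqxx.
Qed.
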